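(* Let $a,b\in\mathbb R$ be such that $\Gamma_{a,b}:y^2=x^3+ax^2+bx$ (projectively $Y^2Z=X^3+aX^2Z+bXZ^2$) is a non-singular cubic. If $A,\bar A,B$ are three points on $\Gamma_{a,b}$ lying on a straight line, then $A\#A=\bar B$.
   Context: On $\Gamma_{a,b}$ one uses the chord-tangent group law with neutral element the inflection point $\mathcal O=(0:1:0)$; $T=(0:0:1)$ is a point of order 2, and the conjugate of a point $P$ is $\bar P:=T+P$. For points $P,Q$ on the curve, $P\#Q$ is the third intersection point (with multiplicity) of the line $PQ$ with the curve, where for $P=Q$ the line is the tangent at $P$; thus $P\#Q=-(P+Q)$, and $A\#A$ is the second intersection of the tangent at $A$ with the curve. *)

(* Defs.v *)
From HB Require Import structures.
From mathcomp Require Import all_boot all_order all_algebra.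
Set Implicit Arguments. Unset Strict Implicit. Unset Printing Implicit Defensive.
Import Order.TTheory GRing.Theory Num.Theory.
Local Open Scope ring_scope.

Section Curve.
Variable R : realFieldType.
Variables a b : R.

(* Points of the projective plane that may lie on the curve:
   [Inf] is (0:1:0), [Aff x y] is (x:y:1). Every point of the curve is of
   one of these forms (Z = 0 forces X = 0 on the curve). *)
Inductive point := Inf | Aff of R & R.

Definition on_curve (P : point) : Prop :=
  match P with
  | Inf => True
  | Aff x y => y ^+ 2 = x ^+ 3 + a * x ^+ 2 + b * x
  end.

(* Non-singularity: no point of the curve where all partial derivatives of
   F = Y^2 Z - X^3 - a X^2 Z - b X Z^2 vanish.  At (0:1:0), dF/dZ = 1 <> 0,
   so only affine points matter; there grad F = 0 iff 2y = 0 and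
   3x^2 + 2ax + b = 0. *)
Definition nonsingular : Prop :=
  forall x y : R, y ^+ 2 = x ^+ 3 + a * x ^+ 2 + b * x ->
    ~ (2 * y = 0 /\ 3 * x ^+ 2 + 2 * a * x + b = 0).

Definition hc (P : point) : R * R * R :=
  match P with Inf => (0, 1, 0) | Aff x y => (x, y, 1) end.

Definition collinear (P Q S : point) : Prop :=
  let: (x1, y1, z1) := hc P in
  let: (x2, y2, z2) := hc Q in
  let: (x3, y3, z3) := hc S in
  x1 * (y2 * z3 - y3 * z2) - y1 * (x2 * z3 - x3 * z2)
    + z1 * (x2 * y3 - x3 * y2) = 0.

(* Third intersection point (with multiplicity) of the line PQ (the tangent
   at P if P = Q) with the curve. *)
Definition third_pt (x1 y1 x2 lam : R) : point :=
  let x3 := lam ^+ 2 - a - x1 - x2 in Aff x3 (y1 + lam * (x3 - x1)).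

Definition sharp (P Q : point) : point :=
  match P, Q with
  | Inf, Inf => Inf
  | Aff x y, Inf | Inf, Aff x y => Aff x (- y)
  | Aff x1 y1, Aff x2 y2 =>
      if x1 != x2 then third_pt x1 y1 x2 ((y2 - y1) / (x2 - x1))
      else if (y1 != y2) || (y1 == 0) then Inf
      else third_pt x1 y1 x1 ((3 * x1 ^+ 2 + 2 * a * x1 + b) / (2 * y1))
  end.

(* Group law with neutral element O = Inf: P + Q = -(P # Q) = (P # Q) # O. *)
Definition add (P Q : point) : point := sharp (sharp P Q) Inf.

Definition Tpt : point := Aff 0 0.

Definition conj (P : point) : point := add Tpt P.

End Curve.

(* Main.v *)
Require Import Defs.
From mathcomp Require Import all_boot all_order all_algebra ring.
Set Implicit Arguments. Unset Strict Implicit. Unset Printing Implicit Defensive.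
Import Order.TTheory GRing.Theory Num.Theory.
Local Open Scope ring_scope.

Section S.
Variable R : realFieldType.
Variables a b : R.

Lemma conj_Inf : conj a b (Inf R) = Aff 0 0.
Proof. rewrite /conj /Defs.add /Tpt /= !oppr0 //. Qed.

Lemma conj_T : conj a b (Aff 0 0) = Inf R.
Proof. by rewrite /conj /Defs.add /Tpt /= eqxx orbT. Qed.

Lemma conj_aff x y : x != 0 -> conj a b (Aff x y) =
  Aff ((y/x)^+2 - a - x) (- (y/x * ((y/x)^+2 - a - x))).
Proof.
move=> hx; rewrite /conj /Defs.add /Tpt /= eq_sym hx /third_pt /=.
by congr Aff; rewrite !subr0 ?add0r.
Qed.

Lemma cubic_third x y c lam u :
  x != c -> y^+2 = x^+3 + a*x^+2 + b*x ->
  (y + lam*(c-x))^+2 = c^+3 + a*c^+2 + b*c ->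
  (y + lam*(u-x))^+2 = u^+3 + a*u^+2 + b*u ->
  (u-x)*(u-c)*(u-(lam^+2-a-x-c)) = 0.
Proof.
move=> hxc h1 h2 h3.
pose F p q := q^+2 - (p^+3 + a * p^+2 + b * p).
have id : (x-c)*(F u (y+lam*(u-x)) + (u-x)*(u-c)*(u-(lam^+2-a-x-c)))
   = (u-c)*F x y - (u-x)*F c (y+lam*(c-x)) by rewrite /F; ring.
move: id; rewrite /F h1 h2 h3 !subrr !mulr0 subr0 add0r => /eqP.
by rewrite mulf_eq0 subr_eq0 (negbTE hxc) => /eqP.
Qed.

Lemma sharp_dbl0 x : sharp a b (Aff x 0) (Aff x 0) = Inf R.
Proof. by rewrite /Defs.sharp /= eqxx /= eqxx orbT. Qed.

Lemma sharp_dbl x y : y != 0 -> sharp a b (Aff x y) (Aff x y) =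
  third_pt a x y x ((3 * x ^+ 2 + 2 * a * x + b) / (2 * y)).
Proof. by move=> hy; rewrite /Defs.sharp /= eqxx /= eqxx /= (negbTE hy). Qed.

Lemma sharp_vert x y : y != - y -> sharp a b (Aff x y) (Aff x (- y)) = Inf R.
Proof. by move=> hy; rewrite /Defs.sharp /= eqxx /= hy. Qed.

Lemma sharp_gen x1 y1 x2 y2 : x1 != x2 -> sharp a b (Aff x1 y1) (Aff x2 y2) =
  third_pt a x1 y1 x2 ((y2 - y1) / (x2 - x1)).
Proof. by move=> h; rewrite /Defs.sharp /= h. Qed.

Lemma col_IT B : on_curve a b B -> collinear (Inf R) (Aff 0 0) B -> B = Inf R \/ B = Aff 0 0.
Proof.
case: B => [|u v]; first by left.
rewrite /collinear /= => hc h; right.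
have u0 : u = 0.
  by move: h; rewrite !(mul0r,mulr0,mul1r,mulr1,sub0r,subr0,add0r,addr0,opprK) => /eqP; rewrite ?oppr_eq0 => /eqP.
move: hc; rewrite u0 !expr0n /= !(mul0r,mulr0,addr0) => /eqP; rewrite sqrf_eq0 => /eqP ->.
by [].
Qed.
Lemma col_TI B : on_curve a b B -> collinear (Aff 0 0) (Inf R) B -> B = Inf R \/ B = Aff 0 0.
Proof.
case: B => [|u v]; first by left.
rewrite /collinear /= => hc h; right.
have u0 : u = 0.
  by move: h; rewrite !(mul0r,mulr0,mul1r,mulr1,sub0r,subr0,oppr0,add0r,addr0,opprK) => /eqP; rewrite ?oppr_eq0 => /eqP.
move: hc; rewrite u0 !expr0n /= !(mul0r,mulr0,addr0) => /eqP; rewrite sqrf_eq0 => /eqP ->.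
by [].
Qed.
End S.

Lemma key (R : realFieldType) (a x y : R) :
  let b := (y^+2 - x^+3 - a*x^+2)/x in
  let c := (y/x)^+2 - a - x in let d := -(y/x*c) in
  let lam := (d-y)/(c-x) in let u := lam^+2 - a - x - c in
  let v := y + lam*(u-x) in
  let mu := (3*x^+2 + 2*a*x + b)/(2*y) in
  x != 0 -> y != 0 -> c != x -> b != 0 ->
  u != 0 /\
  mu^+2 - a - x - x = (v/u)^+2 - a - u /\
  y + mu*((mu^+2 - a - x - x) - x) = -(v/u * ((v/u)^+2 - a - u)).
Proof.
move=> b c d lam u v mu hx hy hc hb.
have e : y ^+ 2 + - a * x ^+ 2 + - x * x ^+ 2 + - x * x ^+ 2 = (c - x) * x^+2.
  by rewrite /c; field.
have sc : y ^+ 2 + - a * x ^+ 2 + - x * x ^+ 2 + - x * x ^+ 2 != 0.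
  by rewrite e mulf_neq0 ?subr_eq0 ?expf_neq0.
have hu : u * (x^+2 - b)^+2 = 4 * b * y^+2.
  rewrite /u /lam /d /c /b; field.
  by rewrite hx sc.
have un : u != 0.
  have four : (4:R) != 0 by rewrite pnatr_eq0.
  apply: contraNneq (mulf_neq0 (mulf_neq0 four hb) (expf_neq0 2 hy)) => u0.
  by rewrite -hu u0 mul0r.
set S := y ^+ 2 + - a * x ^+ 2 + - x * x ^+ 2 + - x * x ^+ 2 in sc.
have eP : (- (y * (y ^+ 2 + - a * x ^+ 2 + - x * x ^+ 2)) + - y * (x * x ^+ 2))
      ^+ 2 +
      - a * (x * S) ^+ 2 +
      - x * (x * S) ^+ 2 +
      - (y ^+ 2 + - a * x ^+ 2 + - x * x ^+ 2) *
      S ^+ 2 = u * (x * S)^+2.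
  rewrite /S /u /lam /d /c; field. by rewrite hx sc.
have sP : u * (x * S)^+2 != 0 by rewrite mulf_neq0 // expf_neq0 // mulf_neq0.
split=> //.
split.
  rewrite /v /u /mu /lam /d /c /b; field.
  by rewrite hx -/S sc eP sP hy.
rewrite /v /u /mu /lam /d /c /b; field.
by rewrite hx -/S sc eP sP hy.
Qed.

Theorem fact7 (R : realFieldType) (a b : R) (A B : point R) :
  nonsingular a b -> on_curve a b A -> on_curve a b B ->
  ((collinear A (conj a b A) B /\ B <> A /\ B <> conj a b A)
   \/ B = sharp a b A (conj a b A)) ->
  sharp a b A A = conj a b B.
Proof.
move=> ns hA hB H.
have b0 : b != 0.
  apply/eqP=> b0; apply: (ns 0 0); first by rewrite b0; ring.
  by split; rewrite ?b0; ring.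
case: A hA H => [|x y] hA H.
  rewrite conj_Inf in H; rewrite /=.
  case: H => [[hc [hne1 hne2]]|->].
    by case: (col_IT hB hc) => hb; [contradiction|rewrite hb conj_T].
  by rewrite /= oppr0 conj_T.
case: (eqVneq x 0) => [x0|hx].
  subst x.
  have y0 : y = 0.
    by move: hA; rewrite /= !expr0n /= !(mul0r,mulr0,addr0) => /eqP; rewrite sqrf_eq0 => /eqP.
  subst y.
  rewrite conj_T in H; rewrite sharp_dbl0.
  case: H => [[hc [hne1 hne2]]|->].
    by case: (col_TI hB hc) => hb; [contradiction|rewrite hb conj_T].
  by rewrite /= oppr0 conj_T.
rewrite conj_aff // in H.
case: (eqVneq y 0) => [y0|hy].
  subst y.
  have hb' : b = - x^+2 - a * x.
    have h0 : x * (b - (- x^+2 - a*x)) = (x^+3 + a*x^+2 + b*x) - 0^+2 by ring.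
    by move: h0; rewrite -hA subrr => /eqP; rewrite mulf_eq0 (negbTE hx) subr_eq0 => /eqP.
  subst b.
  have ec : (0/x)^+2 - a - x = - a - x by ring.
  rewrite ec (_ : - (0 / x * (- a - x)) = 0) in H; last by ring.
  have cx : - a - x != x.
    apply/eqP => e; apply: (ns x 0 hA); split; first by rewrite mulr0.
    have ea : a = - x - x.
      by rewrite [LHS](_ : a = -(-a - x) - x); [rewrite e | ring].
    by rewrite ea; ring.
  rewrite sharp_dbl0.
  suff -> : B = Aff 0 0 by rewrite conj_T.
  case: H => [[hcol [hBA hBc]]|->].
    case: B hB hcol hBA hBc => [|u v] hB hcol hBA hBc.
      rewrite /collinear /= in hcol.
      have : - a - x - x = 0 by rewrite -[RHS]hcol; ring.
      by move/eqP; rewrite subr_eq0 (negbTE cx).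
    rewrite /collinear /= in hcol.
    have : v * (- a - x - x) = 0 by rewrite -[RHS]hcol; ring.
    move/eqP; rewrite mulf_eq0 subr_eq0 (negbTE cx) orbF => /eqP v0; subst v.
    have : u * (u - x) * (u - (- a - x)) = 0.
      move: hB => /= hB.
      have -> : u * (u - x) * (u - (- a - x)) = (u^+3 + a*u^+2 + (- x^+2 - a*x)*u) - 0^+2 by ring.
      by rewrite -hB subrr.
    move/eqP; rewrite !mulf_eq0 !subr_eq0 => /orP [/orP [/eqP->|/eqP u0]|/eqP u0] //.
      by exfalso; apply: hBA; rewrite u0.
    by exfalso; apply: hBc; rewrite u0.
  rewrite sharp_gen 1?eq_sym // /third_pt; congr Aff; ring.
have hbd : b = (y^+2 - x^+3 - a*x^+2)/x by rewrite hA; field.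
subst b.
set c := (y/x)^+2 - a - x in H *.
set d := - (y / x * c) in H *.
case: (eqVneq c x) => [cx|cx].
  have hd : d = - y by rewrite /d cx divfK.
  rewrite cx hd in H.
  have ea : a = (y/x)^+2 - x - x.
    by rewrite [LHS](_ : a = (y/x)^+2 - c - x); [rewrite cx | rewrite /c; ring].
  have yy : y != - y.
    apply/eqP => e; have : y *+ 2 = 0 by rewrite mulr2n {2}e subrr.
    by move/eqP; rewrite mulrn_eq0 /= (negbTE hy).
  suff -> : B = Inf R.
    rewrite conj_Inf sharp_dbl // /third_pt.
    by congr Aff; rewrite ea; field; rewrite hx hy.
  case: H => [[hcol [hBA hBc]]|->].
    case: B hB hcol hBA hBc => [|u v] hB hcol hBA hBc //.
    rewrite /collinear /= in hcol.
    have : 2 * y * (u - x) = 0 by rewrite -[RHS]hcol; ring.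
    move/eqP; rewrite !mulf_eq0 pnatr_eq0 /= (negbTE hy) subr_eq0 /= => /eqP ux.
    subst u.
    have : (v - y) * (v + y) = 0.
      move: hB => /= hB.
      rewrite (_ : (v - y) * (v + y) = v^+2 - y^+2); last by ring.
      by rewrite hB; apply/eqP; rewrite subr_eq0; apply/eqP; exact: esym hA.
    move/eqP; rewrite mulf_eq0 subr_eq0 addr_eq0 => /orP [/eqP vy|/eqP vy].
      by exfalso; apply: hBA; rewrite vy.
    by exfalso; apply: hBc; rewrite vy.
  by rewrite sharp_vert.
have cx0 : c - x != 0 by rewrite subr_eq0.
set lam := (d - y) / (c - x).
have hcc : d^+2 = c^+3 + a*c^+2 + (y^+2 - x^+3 - a*x^+2)/x * c.
  by rewrite /d /c; field.
have hdl : d = y + lam * (c - x) by rewrite /lam; field.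
have hb0 : (y^+2 - x^+3 - a*x^+2)/x != 0 by [].
have [un [e1 e2]] := key hx hy cx hb0.
have xc : x != c by rewrite eq_sym.
have -> : B = third_pt a x y c lam.
  case: H => [[hcol [hBA hBc]]|->]; last by rewrite sharp_gen.
  case: B hB hcol hBA hBc => [|u v] hB hcol hBA hBc.
    rewrite /collinear /= in hcol.
    have : c - x = 0 by rewrite -[RHS]hcol; ring.
    by move/eqP; rewrite (negbTE cx0).
  rewrite /collinear /= in hcol.
  have hv0 : v * (c - x) = y * (c - u) + d * (u - x).
    apply/eqP; rewrite -subr_eq0; apply/eqP; rewrite -[RHS]hcol; ring.
  have hv : v = y + lam * (u - x).
    by apply: (mulIf cx0); rewrite hv0 /lam; field.
  subst v.
  have := cubic_third xc hA (etrans (esym (congr1 (fun t => t^+2) hdl)) hcc) hB.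
  move/eqP; rewrite !mulf_eq0 !subr_eq0 => /orP [/orP [/eqP ux|/eqP ux]|/eqP ux].
  - by subst u; rewrite subrr mulr0 addr0 in hBA.
  - by subst u; rewrite -hdl in hBc.
  - by rewrite ux.
rewrite /third_pt conj_aff //.
rewrite sharp_dbl // /third_pt.
congr Aff; [exact: e1|exact: e2].
Qed.
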